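(* Let $X$ be a real random variable with cumulative distribution function $F$, $\bar F=1-F$, and assume there exists $\epsilon>0$ with $\mathbb{E}[e^{(1+\epsilon)X}]<\infty$. Let $c(k)=\int_k^\infty(e^x-e^k)\,dF(x)$. If $-\log\bar F\in R_\alpha$ for some $\alpha\ge1$, then $-\log c\in R_\alpha$ and, as $k\to\infty$, $$-\log c(k)\sim -k-\log\bar F(k).$$
   Context: A measurable function $g$, positive for large $x$, is in $R_\alpha$ (regularly varying at $+\infty$ with index $\alpha$) if $\lim_{x\to\infty}g(\lambda x)/g(x)=\lambda^\alpha$ for every $\lambda>0$. $g\sim h$ means $g(k)/h(k)\to1$ as $k\to\infty$. *)

(* Defs.v *)
From HB Require Import structures.
From mathcomp Require Import all_boot all_order all_algebra.
From mathcomp Require Import all_classical all_reals all_analysis.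
Set Implicit Arguments. Unset Strict Implicit. Unset Printing Implicit Defensive.
Import Order.TTheory GRing.Theory Num.Theory.
Import numFieldNormedType.Exports.
Local Open Scope classical_set_scope.
Local Open Scope ring_scope.

Definition regularly_varying (R : realType) (alpha : R) (g : R -> R) : Prop :=
  measurable_fun setT g /\
  (\forall x \near +oo, 0 < g x) /\
  (forall lam : R, 0 < lam ->
     (fun x => g (lam * x) / g x) @ +oo --> (lam `^ alpha : R)).

Definition asym_equiv (R : realType) (g h : R -> R) : Prop :=
  (fun k => g k / h k) @ +oo --> (1 : R).

Definition law_cdf (R : realType) (mu : probability R R) (x : R) : R :=
  fine (mu [set` `]-oo, x]]).

Definition call_price (R : realType) (mu : probability R R) (k : R) : R :=
  fine (\int[mu]_(x in [set` `]k, +oo[]) (expR x - expR k)%:E)%E.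

(* Main.v *)
Require Import Defs.
From HB Require Import structures.
From mathcomp Require Import all_boot all_order all_algebra.
From mathcomp Require Import all_classical all_reals all_analysis.
Import Order.TTheory GRing.Theory Num.Theory.
Import numFieldNormedType.Exports.
Local Open Scope classical_set_scope.
Local Open Scope ring_scope.
From mathcomp Require Import ring lra measurable_realfun.

Section Core.
Variables (R : realType) (g c : R -> R) (alpha p C M0 : R).
Hypotheses (p1 : 1 < p) (a1 : 1 <= alpha)
  (gnd : forall x y, x <= y -> g x <= g y)
  (gtail : forall x, p * x - C <= g x)
  (grv : forall lam, 0 < lam ->
     (fun x => g (lam * x) / g x) @ +oo --> lam `^ alpha)
  (M0ge0 : 0 <= M0)
  (clow : forall k b, k < b -> (expR b - expR k) * expR (- g b) <= c k)
  (cup : forall k t s n, 0 < s -> c k <=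
     \sum_(i < n) (expR (k + (i.+1)%:R * s) * expR (- g (k + i%:R * s)))
     + expR t * expR (- g (k + n%:R * s)) + expR (- (p - 1) * t) * M0)
  (cni : forall x y, x <= y -> c y <= c x).

Let p0 : 0 < p. Proof. exact: lt_trans ltr01 p1. Qed.

Lemma near_ge (A : R) : \forall x \near +oo, A <= x.
Proof. exact: nbhs_pinfty_ge (num_real A). Qed.

Lemma near_gt (A : R) : \forall x \near +oo, A < x.
Proof. exact: nbhs_pinfty_gt (num_real A). Qed.

Lemma g_near (A : R) : \forall x \near +oo, A <= g x.
Proof.
near=> x; apply: le_trans (gtail x).
have : (A + C) / p <= x by near: x; exact: near_ge.
rewrite ler_pdivrMr // => h; lra.
Unshelve. all: by end_near. Qed.

Lemma c_pos k : 0 < c k.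
Proof.
have h : k < k + 1 by rewrite ltrDl.
have h0 : 0 < (expR (k + 1) - expR k) * expR (- g (k + 1)).
  by rewrite mulr_gt0 ?expR_gt0 // subr_gt0 ltr_expR.
exact: lt_le_trans h0 (clow _ _ h).
Qed.

Lemma upper (eta : R) : 0 < eta ->
  \forall k \near +oo, - ln (c k) <= (1 + eta) * (g k - k).
Proof.
move=> eta0.
have e0 : 0 < p - 1 by rewrite subr_gt0.
pose th := eta * (p - 1) / (4 * p).
have th0 : 0 < th by rewrite /th divr_gt0 ?mulr_gt0.
pose lam := expR (ln (1 + th) / alpha).
have al0 : 0 < alpha := lt_le_trans ltr01 a1.
have lam1 : 1 < lam by rewrite expR_gt1 divr_gt0 // ln_gt0 // ltrDl.
have lam0 : 0 < lam := lt_trans ltr01 lam1.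
have lamA : lam `^ alpha = 1 + th.
  rewrite /powR gt_eqF // expRK mulrC divfK ?gt_eqF // lnK // posrE.
  by rewrite addr_gt0.
have := grv _ lam0; rewrite lamA => /cvgrPdist_le /(_ th th0) Hq.
pose Big := 2 * (p * ln 2 + eta * C) / (eta * (p - 1)).
near=> k.
have k0 : 0 < k by near: k; exact: near_gt.
have gk1 : 1 <= g k by near: k; apply: g_near.
have gk0 : 0 < g k := lt_le_trans ltr01 gk1.
have hq : g (lam * k) <= (1 + 2 * th) * g k.
  have : `|1 + th - g (lam * k) / g k| <= th by near: k.
  rewrite ler_norml => /andP[h _].
  have : g (lam * k) / g k <= 1 + 2 * th by lra.
  by rewrite ler_pdivrMr.
have klk : k < lam * k by rewrite ltr_pMl.
have clb := clow _ _ klk.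
have Hl2 : ln 2 + k <= lam * k.
  have : ln 2 / (lam - 1) <= k by near: k; exact: near_ge.
  rewrite ler_pdivrMr ?subr_gt0 // => h; lra.
have v2 : expR (lam * k - ln 2) <= expR (lam * k) - expR k.
  rewrite expRB lnK ?posrE //.
  have : expR (ln 2 + k) <= expR (lam * k) by rewrite ler_expR.
  rewrite expRD lnK ?posrE // => h; lra.
have vpos : 0 < expR (lam * k - ln 2) by apply: expR_gt0.
have Lk : - ln (c k) <= g (lam * k) - (lam * k - ln 2).
  rewrite lerNl opprB.
  have h1 : expR (lam * k - ln 2) * expR (- g (lam * k)) <= c k.
    apply: le_trans clb; apply: ler_wpM2r => //; exact/ltW/expR_gt0.
  have := h1; rewrite -ler_ln ?posrE ?mulr_gt0 ?expR_gt0 ?c_pos //.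
  rewrite lnM ?posrE ?expR_gt0 // !expRK => h; lra.
have gbig : Big <= g k by near: k; apply: g_near.
have tl := gtail k.
apply: le_trans Lk _.
have : Big * (eta * (p - 1)) <= g k * (eta * (p - 1)).
  by rewrite ler_pM2r // mulr_gt0.
rewrite /Big divfK ?gt_eqF ?mulr_gt0 // => hb.
have F1 : eta * (p * k) <= eta * (g k + C) by rewrite ler_pM2l //; lra.
have key : p * (g (lam * k) - (lam * k - ln 2)) <= p * ((1 + eta) * (g k - k)).
  have h2 : p * g (lam * k) <= p * ((1 + 2 * th) * g k) by rewrite ler_pM2l.
  have h3 : p * (1 + 2 * th) = p + eta * (p - 1) / 2.
    by rewrite /th; field; rewrite gt_eqF.
  have h4 : p * (lam * k) >= p * k by rewrite ler_pM2l // ler_pMl // ltW.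
  nra.
by rewrite ler_pM2l in key.
Unshelve. all: by end_near. Qed.


Lemma near_all (P : nat -> R -> Prop) (N : nat) :
  (forall i, (i < N)%N -> \forall x \near +oo, P i x) ->
  \forall x \near +oo, forall i, (i < N)%N -> P i x.
Proof.
elim: N => [|N IH] H.
  by apply: nearW => x i.
have H1 := IH (fun i hi => H i (ltn_trans hi (ltnSn N))).
have HN := H N (ltnSn N).
apply: filterS2 H1 HN => x h1 h2 i; rewrite ltnS leq_eqVlt => /orP[/eqP->|hi] //.
exact: h1.
Qed.

Lemma lower (eta : R) : 0 < eta -> eta <= 1 ->
  \forall k \near +oo, (1 - eta) * (g k - k) <= - ln (c k).
Proof.
move=> eta0 eta1.
have e0 : 0 < p - 1 by rewrite subr_gt0.
pose d := eta * (p - 1) / 4.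
have d0 : 0 < d by rewrite /d divr_gt0 ?mulr_gt0.
pose e1 := eta * (p - 1) / (4 * p).
have e10 : 0 < e1 by rewrite /e1 divr_gt0 ?mulr_gt0.
have e11 : e1 <= 1.
  rewrite /e1 ler_pdivrMr ?mulr_gt0 // mul1r; nra.
have pe1 : p * e1 = d by rewrite /e1 /d; field; rewrite gt_eqF.
pose n := (Num.trunc ((2 * p / (p - 1) + 1) / d)).+1.
have hn : 2 * p / (p - 1) + 1 <= n%:R * d.
  rewrite -ler_pdivrMr //; apply: ltW; exact: truncnS_gt.
clearbody n.
pose K0 := ln (n%:R + 1 + M0).
have nM0 : 0 < n%:R + 1 + M0.
  have := ler0n R n; have := M0ge0; move: (n%:R : R) => N hm hN. lra.
have K00 : 0 <= K0.
  rewrite /K0 -(ln1 R) ler_ln ?posrE //; have := ler0n R n; have := M0ge0; move=> ? ?; lra.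
pose lam (i : nat) := 1 + i%:R * d.
have lam1 i : 1 <= lam i by rewrite /lam lerDl mulr_ge0 // ltW.
have lam0 i : 0 < lam i := lt_le_trans ltr01 (lam1 i).
have Hfam : \forall k \near +oo, forall i, (i < n.+1)%N ->
    (lam i - e1) * g k <= g (lam i * k).
  apply: near_all => i _.
  have := grv _ (lam0 i) => /cvgrPdist_le /(_ e1 e10) Hq.
  near=> k.
  have gk1 : 1 <= g k by near: k; apply: g_near.
  have gk0 : 0 < g k := lt_le_trans ltr01 gk1.
  have : `|lam i `^ alpha - g (lam i * k) / g k| <= e1 by near: k.
  rewrite ler_norml => /andP[_ h].
  have hl : lam i <= lam i `^ alpha by apply: le1r_powR.
  have : lam i - e1 <= g (lam i * k) / g k by lra.
  by rewrite ler_pdivlMr.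
pose Big := 2 * ((eta + d) * C + p * K0) / (eta * (p - 1)).
near=> k.
have k0 : 0 < k by near: k; exact: near_gt.
have gk1 : 1 <= g k by near: k; apply: g_near.
have gkk : k <= g k.
  have : C / (p - 1) <= k by near: k; exact: near_ge.
  rewrite ler_pdivrMr // => h; have := gtail k; lra.
have gK0 : K0 <= g k by near: k; apply: g_near.
have gbig : Big <= g k by near: k; apply: g_near.
have F2 : 2 * ((eta + d) * C + p * K0) <= g k * (eta * (p - 1)).
  have : Big * (eta * (p - 1)) <= g k * (eta * (p - 1)).
    by rewrite ler_pM2r // mulr_gt0.
  by rewrite /Big divfK ?gt_eqF ?mulr_gt0.
have F1 : (eta + d) * (p * k) <= (eta + d) * (g k + C).
  by rewrite ler_pM2l ?addr_gt0 //; have := gtail k; lra.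
have Hf : forall i, (i < n.+1)%N -> (lam i - e1) * g k <= g (lam i * k).
  by near: k.
pose s := d * k.
have s0 : 0 < s by rewrite mulr_gt0.
pose b := k + n%:R * s.
pose t := g b / p.
pose E := - (1 - eta) * (g k - k) - K0.
have cu := cup k t s n s0.
have Hterm : forall i : 'I_n,
    expR (k + (i.+1)%:R * s) * expR (- g (k + i%:R * s)) <= expR E.
  move=> i; rewrite -expRD ler_expR.
  have -> : k + i%:R * s = lam i * k by rewrite /lam /s; ring.
  have hi := Hf i (ltn_trans (ltn_ord i) (ltnSn n)).
  have F3 : 0 <= i%:R * d * (g k - k) by rewrite mulr_ge0 ?mulr_ge0 ?subr_ge0 // ltW.
  have S1 : k + (i.+1)%:R * s - g (lam i * k) <= - (g k - k) + d * k + e1 * g k.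
    rewrite /s /lam -natr1 in hi *; nra.
  apply: le_trans S1 _.
  rewrite -(ler_pM2l p0).
  have : p * (e1 * g k) = d * g k by rewrite mulrA pe1.
  have hd4 : g k * (eta * (p - 1)) = 4 * d * g k by rewrite /d; field.
  rewrite /E => h; lra.
have Hlast : expR t * expR (- g b) <= expR E /\ expR (- (p - 1) * t) <= expR E.
  have ht : t - g b = - (p - 1) * t by rewrite /t; field; rewrite gt_eqF.
  rewrite -expRD ht.
  suff h : - (p - 1) * t <= E by split; rewrite ler_expR.
  have hb : (lam n - e1) * g k <= g b.
    have -> : b = lam n * k by rewrite /b /lam /s; ring.
    exact: Hf.
  have hb2 : 2 * p / (p - 1) * g k <= g b.
    apply: le_trans hb; rewrite ler_pM2r //; last exact: lt_le_trans ltr01 gk1.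
    rewrite /lam; lra.
  have : (p - 1) / p * (2 * p / (p - 1) * g k) <= (p - 1) / p * g b.
    by rewrite ler_pM2l // divr_gt0.
  have -> : (p - 1) / p * (2 * p / (p - 1) * g k) = 2 * g k.
    by field; rewrite !gt_eqF.
  have -> : (p - 1) / p * g b = (p - 1) * t by rewrite /t; field; rewrite gt_eqF.
  rewrite /E => h.
  have : (1 - eta) * (g k - k) <= g k by nra.
  lra.
have csum : c k <= expR E * (n%:R + 1 + M0).
  apply: le_trans cu _.
  have -> : expR E * (n%:R + 1 + M0) = expR E * n%:R + expR E + expR E * M0.
    by ring.
  case: Hlast => h1 h2.
  apply: lerD; [apply: lerD => //|by rewrite ler_wpM2r].
  apply: le_trans (ler_sum _ (fun i _ => Hterm i)) _.
  by rewrite sumr_const card_ord mulr_natr.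
have : expR E * (n%:R + 1 + M0) = expR (- (1 - eta) * (g k - k)).
  by rewrite /E expRB /K0 lnK ?posrE // divfK ?gt_eqF.
move=> hE; rewrite hE in csum.
have := csum; rewrite -ler_ln ?posrE ?c_pos ?expR_gt0 // expRK => h.
lra.
Unshelve. all: by end_near. Qed.

Lemma h_pos : \forall k \near +oo, 0 < g k - k.
Proof.
have e0 : 0 < p - 1 by rewrite subr_gt0.
near=> k.
have : C / (p - 1) < k by near: k; exact: near_gt.
rewrite ltr_pdivrMr // => h; have := gtail k; move=> h2; nra.
Unshelve. all: by end_near. Qed.

Lemma Acvg : (fun k => - ln (c k) / (g k - k)) @ +oo --> (1 : R).
Proof.
apply/cvgrPdist_le => e e0.
pose eta := Num.min e 1.
have eta0 : 0 < eta by rewrite lt_min e0 ltr01.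
have eta1 : eta <= 1 by rewrite ge_min lexx orbT.
have etae : eta <= e by rewrite ge_min lexx.
have Hu := upper _ eta0.
have Hl := lower _ eta0 eta1.
near=> k.
have hk : 0 < g k - k by near: k; exact: h_pos.
have u : - ln (c k) <= (1 + eta) * (g k - k) by near: k.
have l : (1 - eta) * (g k - k) <= - ln (c k) by near: k.
rewrite ler_norml; apply/andP; split.
  have : - ln (c k) / (g k - k) <= 1 + eta by rewrite ler_pdivrMr.
  move=> h; lra.
have : 1 - eta <= - ln (c k) / (g k - k) by rewrite ler_pdivlMr.
move=> h; lra.
Unshelve. all: by end_near. Qed.

Lemma r_to0 : 1 < alpha -> forall del, 0 < del ->
  \forall x \near +oo, x / g x <= del.
Proof.
move=> a1' del del0.
have w2 : 2 < 2 `^ alpha.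
  have l2 : 0 < ln (2 : R) by apply: ln_gt0; rewrite ltr1n.
  rewrite /powR gt_eqF ?ltr0n // -[X in X < _](@lnK _ 2) ?posrE ?ltr0n //.
  by rewrite ltr_expR ltr_pMl.
pose w := 2 `^ alpha.
have w20 : 0 < (w - 2) / 2 by rewrite divr_gt0 // subr_gt0.
have two0 : (0 : R) < 2 by rewrite ltr0n.
have := grv 2 two0 => /cvgrPdist_le /(_ _ w20) Hq.
have HP : \forall x \near +oo,
    [/\ 1 <= g x, x <= g x, (w + 2) / 2 * g x <= g (2 * x) & 0 < x].
  near=> x.
  have gx1 : 1 <= g x by near: x; apply: g_near.
  have gx0 : 0 < g x := lt_le_trans ltr01 gx1.
  have x0 : 0 < x by near: x; exact: near_gt.
  split => //.
  - have : C / (p - 1) <= x by near: x; exact: near_ge.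
    rewrite ler_pdivrMr ?subr_gt0 // => h; have := gtail x; move=> h2; nra.
  - have : `|w - g (2 * x) / g x| <= (w - 2) / 2 by near: x.
    rewrite ler_norml => /andP[_ h].
    have : (w + 2) / 2 <= g (2 * x) / g x by lra.
    by rewrite ler_pdivlMr.
case: HP => K [_ HK].
pose K' := Num.max K 1.
have K'0 : 0 < K' by rewrite lt_max ltr01 orbT.
pose q0 := 4 / (w + 2).
have q00 : 0 < q0 by rewrite divr_gt0 // addr_gt0 // (lt_trans _ w2).
have q01 : q0 < 1 by rewrite ltr_pdivrMr ?addr_gt0 ?(lt_trans _ w2) // mul1r; lra.
have claim : forall m : nat, forall x, 2 ^+ m * K' < x -> x / g x <= q0 ^+ m.
  elim=> [|m IH] x.
    rewrite expr0 mul1r => hx.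
    have [g1 gx _ _] : [/\ 1 <= g x, x <= g x, (w + 2) / 2 * g x <= g (2 * x) & 0 < x].
      by apply: HK; apply: le_lt_trans hx; rewrite le_max lexx.
    by rewrite expr0 ler_pdivrMr ?mul1r // (lt_le_trans ltr01).
  move=> hx.
  pose y := x / 2.
  have hy : 2 ^+ m * K' < y.
    rewrite /y ltr_pdivlMr //.
    by have -> : 2 ^+ m * K' * 2 = 2 ^+ m.+1 * K' by rewrite exprS; ring.
  have [g1 gy h2 y0] : [/\ 1 <= g y, y <= g y, (w + 2) / 2 * g y <= g (2 * y) & 0 < y].
    apply: HK; apply: le_lt_trans hy.
    apply: le_trans (_ : K' <= _); first by rewrite le_max lexx.
    apply: ler_peMl; first exact: ltW.
    by apply: exprn_ege1; rewrite ler1n.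
  have xy : x = 2 * y by rewrite /y mulrC divfK.
  have gy0 : 0 < g y := lt_le_trans ltr01 g1.
  have IHy := IH y hy.
  rewrite xy exprS.
  have gx0 : 0 < (w + 2) / 2 * g y by rewrite mulr_gt0 // divr_gt0 // addr_gt0 // (lt_trans _ w2).
  apply: le_trans (_ : 2 * y / ((w + 2) / 2 * g y) <= _).
    apply: ler_wpM2l; first by rewrite mulr_ge0 // ltW.
    by rewrite lef_pV2 ?posrE // (lt_le_trans gx0 h2).
  have -> : 2 * y / ((w + 2) / 2 * g y) = q0 * (y / g y).
    by rewrite /q0; field; rewrite !gt_eqF // ?addr_gt0 // (lt_trans _ w2).
  by rewrite ler_pM2l.
have := @cvg_geometric R 1 q0; rewrite gtr0_norm // => /(_ q01).
move=> /cvgrPdist_le /(_ del del0) [N _ HN].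
have := HN N (leqnn N) => /= hN.
rewrite sub0r normrN mul1r ger0_norm in hN; last by rewrite exprn_ge0 // ltW.
near=> x.
apply: le_trans hN; apply: claim.
by near: x; exact: near_gt.
Unshelve. all: by end_near. Qed.

Lemma rterm lam e : 0 < lam -> 0 < e ->
  \forall k \near +oo, `|k / g k * (lam `^ alpha - lam)| <= e.
Proof.
move=> lam0 e0.
move: a1; rewrite le_eqVlt => /orP[/eqP<-|a1'].
  apply: nearW => k; rewrite powRr1; last exact: ltW.
  by rewrite subrr mulr0 normr0; exact: ltW e0.
pose del := e / (`|lam `^ alpha - lam| + 1).
have del0 : 0 < del by rewrite divr_gt0 // ltr_wpDl.
have := r_to0 a1' _ del0.
move=> H.
near=> k.
have k0 : 0 < k by near: k; exact: near_gt.
have gk1 : 1 <= g k by near: k; apply: g_near.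
have hr : k / g k <= del by near: k.
have r0 : 0 <= k / g k by rewrite divr_ge0 // ltW // (lt_le_trans ltr01).
rewrite normrM ger0_norm //.
apply: le_trans (_ : del * `|lam `^ alpha - lam| <= _).
  by rewrite ler_wpM2r.
rewrite /del mulrAC ler_pdivrMr ?ltr_wpDl // ler_pM2l //.
by rewrite lerDl.
Unshelve. all: by end_near. Qed.

Lemma Bcvg lam : 0 < lam ->
  (fun k => (g (lam * k) - lam * k) / (g k - k)) @ +oo --> lam `^ alpha.
Proof.
move=> lam0; apply/cvgrPdist_le => e e0.
have e10 : 0 < p - 1 by rewrite subr_gt0.
pose la := lam `^ alpha.
pose u := 2 / (p - 1).
have u0 : 0 < u by rewrite divr_gt0.
have hu : u * (p - 1) = 2 by rewrite /u divfK ?gt_eqF.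
pose K1 := 1 + u.
have K10 : 0 < K1 by rewrite addr_gt0.
pose e2 := e / (2 * K1).
have e20 : 0 < e2 by rewrite divr_gt0 // mulr_gt0.
have := grv _ lam0 => /cvgrPdist_le /(_ _ e20) Hq.
have Hr := rterm _ _ lam0 e20.
near=> k.
have k0 : 0 < k by near: k; exact: near_gt.
have gk1 : 1 <= g k by near: k; apply: g_near.
have gk0 : 0 < g k := lt_le_trans ltr01 gk1.
have hk : 0 < g k - k by near: k; exact: h_pos.
have hC : 2 * C <= (p - 1) * k.
  have : 2 * C / (p - 1) <= k by near: k; exact: near_ge.
  by rewrite ler_pdivrMr // [k * _]mulrC.
have hK : g k / (g k - k) <= K1.
  rewrite ler_pdivrMr //.
  have tl := gtail k.
  have h1 : u * (2 * C) <= u * ((p - 1) * k) by rewrite ler_pM2l.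
  have h2 : u * ((p - 1) * k - C) <= u * (g k - k) by rewrite ler_pM2l //; lra.
  rewrite /K1; nra.
have hq : `|la - g (lam * k) / g k| <= e2 by near: k.
have hr : `|k / g k * (la - lam)| <= e2 by near: k.
have idt : (g (lam * k) - lam * k) / (g k - k) - la =
    g k / (g k - k) * ((g (lam * k) / g k - la) + k / g k * (la - lam)).
  by field; rewrite !gt_eqF.
rewrite distrC idt normrM ger0_norm; last by rewrite divr_ge0 // ltW.
have fin : K1 * (e2 + e2) = e.
  by rewrite /e2; field; rewrite gt_eqF.
rewrite -fin.
apply: (@le_trans _ _ (g k / (g k - k) * (e2 + e2))); last first.
  by rewrite ler_pM2r // addr_gt0.
rewrite ler_pM2l ?divr_gt0 //.
apply: le_trans (ler_normD _ _) _.
by apply: lerD => //; rewrite distrC.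
Unshelve. all: by end_near. Qed.

Lemma scale_oo (lam : R) : 0 < lam -> (fun k => lam * k) @ pinfty_nbhs R --> pinfty_nbhs R.
Proof.
move=> lam0; apply/cvgryPge => A; near=> k.
have : A / lam <= k by near: k; exact: near_ge.
by rewrite ler_pdivrMr // mulrC.
Unshelve. all: by end_near. Qed.

Lemma Lrv lam : 0 < lam ->
  (fun k => - ln (c (lam * k)) / - ln (c k)) @ +oo --> lam `^ alpha.
Proof.
move=> lam0.
have HA := Acvg.
have HAl : (fun k => - ln (c (lam * k)) / (g (lam * k) - lam * k)) @ +oo --> (1 : R).
  exact: (cvg_comp _ _ (scale_oo _ lam0) HA).
have HB := Bcvg _ lam0.
have HV : (fun k => (- ln (c k) / (g k - k))^-1) @ +oo --> (1 : R)^-1.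
  by apply: cvgV; [exact: oner_neq0 | exact: HA].
have HM : (fun k => - ln (c (lam * k)) / (g (lam * k) - lam * k) *
    ((g (lam * k) - lam * k) / (g k - k)) * (- ln (c k) / (g k - k))^-1)
    @ +oo --> 1 * lam `^ alpha * (1 : R)^-1.
  by apply: cvgM; [apply: cvgM|].
rewrite mul1r invr1 mulr1 in HM.
apply: cvg_trans HM.
apply: near_eq_cvg.
have e10 : 0 < p - 1 by rewrite subr_gt0.
have h12 : (0 : R) < 1 / 2 by rewrite mul1r invr_gt0 ltr0n.
have h121 : (1 / 2 : R) <= 1 by rewrite ler_pdivrMr ?ltr0n // mul1r ler1n.
have Hl := lower _ h12 h121.
near=> k.
have hk : 0 < g k - k by near: k; exact: h_pos.
have hlk : 0 < g (lam * k) - lam * k.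
  have : C / (p - 1) / lam < k by near: k; exact: near_gt.
  rewrite ltr_pdivrMr // ltr_pdivrMr // => h.
  have := gtail (lam * k); move=> h2; nra.
have Lk : 0 < - ln (c k).
  have : (1 - 1 / 2) * (g k - k) <= - ln (c k) by near: k; apply: Hl.
  by apply: lt_le_trans; rewrite mulr_gt0 // subr_gt0 ltr_pdivrMr // mul1r ltr1n.
rewrite /=; field.
have lk0 : ln (c k) != 0 by rewrite -oppr_eq0 gt_eqF.
by rewrite lk0 !gt_eqF.
Unshelve. all: by end_near. Qed.

Theorem core_main :
  regularly_varying alpha (fun k => - ln (c k)) /\
  asym_equiv (fun k => - ln (c k)) (fun k => g k - k).
Proof.
split; last exact: Acvg.
split; [|split].
- apply: measurable_realfun.nondecreasing_measurable => // x y xy.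
  by rewrite lerN2 ler_ln ?posrE ?c_pos //; exact: cni.
- have h12 : (0 : R) < 1 / 2 by rewrite mul1r invr_gt0 ltr0n.
  have h121 : (1 / 2 : R) <= 1 by rewrite ler_pdivrMr ?ltr0n // mul1r ler1n.
  have Hl := lower _ h12 h121.
  near=> k.
  have hk : 0 < g k - k by near: k; exact: h_pos.
  have : (1 - 1 / 2) * (g k - k) <= - ln (c k) by near: k; apply: Hl.
  by apply: lt_le_trans; rewrite mulr_gt0 // subr_gt0 ltr_pdivrMr // mul1r ltr1n.
- exact: Lrv.
Unshelve. all: by end_near. Qed.

End Core.

Section Meas.
Variables (R : realType) (mu : probability R R).

Lemma mEF (f : R -> R) (D : set R) : measurable_fun setT f ->
  measurable_fun D (fun x => (f x)%:E).
Proof. by move=> mf; apply/measurable_EFinP; exact: measurable_funTS. Qed.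

Lemma mu_fin (A : set R) : measurable A -> mu A \is a fin_num.
Proof. by move=> mA; exact: fin_num_measure. Qed.

Lemma cdf_tail x : (1 - law_cdf mu x)%R = fine (mu [set` `]x, +oo[]).
Proof.
rewrite /law_cdf.
have hU : [set` `]-oo, x]] `|` [set` `]x, +oo[] = setT.
  by rewrite -setCitvl setUCr.
have hI : [set` `]-oo, x]] `&` [set` `]x, +oo[] = set0.
  by rewrite -setCitvl setICr.
have := measureU mu (measurable_itv _) (measurable_itv _) hI.
rewrite hU => h.
have := etrans (esym (probability_setT mu)) h => /(congr1 fine).
rewrite fineD ?mu_fin //= => h2.
by rewrite h2; ring.
Qed.

Lemma lb_int (D A : set R) (f : R -> R) (v : R) :
  measurable D -> measurable A -> A `<=` D -> measurable_fun setT f ->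
  (forall x, D x -> 0 <= f x)%R -> (forall x, A x -> v <= f x)%R -> (0 <= v)%R ->
  (v%:E * mu A <= \int[mu]_(x in D) (f x)%:E)%E.
Proof.
Local Open Scope ereal_scope.
move=> mD mA AD mf f0 fv v0.
rewrite -(@integral_cst _ _ _ mu A mA v%:E).
apply: (@le_trans _ _ (\int[mu]_(x in A) (f x)%:E)).
  apply: ge0_le_integral => //.
  exact: mEF.
apply: ge0_subset_integral => //; exact: mEF.
Qed.
Local Close Scope ereal_scope.


Lemma grid_bound (k s x : R) (n : nat) : (k < x)%R -> (x <= k + n%:R * s)%R ->
  (expR x <= \sum_(i < n) expR (k + i.+1%:R * s) *
     \1_([set` `](k + i%:R * s), +oo[]) x)%R.
Proof.
move=> kx; elim: n => [|n IH] hx.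
  by rewrite mul0r addr0 in hx; move: (lt_le_trans kx hx); rewrite ltxx.
rewrite big_ord_recr /=.
have t0 : (0 <= expR (k + n.+1%:R * s) * \1_([set` `](k + n%:R * s), +oo[]) x)%R.
  by rewrite mulr_ge0 ?expR_ge0 // indicE ler0n.
have s0 : (0 <= \sum_(i < n) expR (k + i.+1%:R * s) *
     \1_([set` `](k + i%:R * s), +oo[]) x)%R.
  by apply: sumr_ge0 => i _; rewrite mulr_ge0 ?expR_ge0 // indicE ler0n.
have [hn|hn] := leP x (k + n%:R * s).
  by apply: le_trans (IH hn) _; rewrite lerDl.
rewrite indicE mem_set; last by rewrite /= in_itv /= andbT.
rewrite mulr1; apply: le_trans (_ : expR (k + n.+1%:R * s) <= _); last by rewrite lerDr.
by rewrite ler_expR.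
Qed.

Lemma ub_int (k t s eps : R) (n : nat) : (0 < s)%R -> (0 < eps)%R ->
  (\int[mu]_(x in [set` `]k, +oo[]) (expR x - expR k)%:E <=
  \sum_(i < n) ((expR (k + i.+1%:R * s))%:E * mu [set` `](k + i%:R * s)%R, +oo[])
  + (expR t)%:E * mu [set` `](k + n%:R * s)%R, +oo[]
  + (expR (- eps * t))%:E * \int[mu]_x (expR ((1 + eps) * x))%:E)%E.
Proof.
Local Open Scope ereal_scope.
move=> s0 e0.
set D := [set` `]k, +oo[].
have mD : measurable D := measurable_itv _.
pose A (y : R) := [set` `]y, +oo[].
have mA y : measurable (A y) := measurable_itv _.
pose F (i : 'I_n) x := (expR (k + i.+1%:R * s))%:E * (\1_(A (k + i%:R * s)) x)%:E.
pose Ft x := (expR t)%:E * (\1_(A (k + n%:R * s)) x)%:E.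
pose Fe x := (expR (- eps * t))%:E * (expR ((1 + eps) * x))%:E.
have mI y : measurable_fun D (fun x => (\1_(A y) x : R)%:E).
  exact: (@mEF _ D (measurable_indic (mA y))).
have mexp : measurable_fun setT (fun x : R => expR ((1 + eps) * x)).
  apply: measurableT_comp; first exact: measurable_expR.
  exact: (measurable_funM (measurable_cst (1 + eps)%R) (@measurable_id _ _ setT)).
have mF i : measurable_fun D (F i) by apply: measurable_funeM.
have mFt : measurable_fun D Ft by apply: measurable_funeM.
have mFe : measurable_fun D Fe by apply: measurable_funeM; exact: mEF.
have F0 i x : D x -> 0 <= F i x.
  by move=> _; rewrite /F -EFinM lee_fin mulr_ge0 ?expR_ge0 // indicE ler0n.
have Ft0 x : D x -> 0 <= Ft x.
  by move=> _; rewrite /Ft -EFinM lee_fin mulr_ge0 ?expR_ge0 // indicE ler0n.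
have Fe0 x : D x -> 0 <= Fe x.
  by move=> _; rewrite /Fe -EFinM lee_fin mulr_ge0 ?expR_ge0.
have Fs0 x : D x -> 0 <= \sum_(i < n) F i x by move=> Dx; apply: sume_ge0 => i _; exact: F0.
have pw x : D x -> (expR x - expR k)%:E <= \sum_(i < n) F i x + Ft x + Fe x.
  move=> Dx; have kx : (k < x)%R by move: Dx; rewrite /D /= in_itv /= andbT.
  rewrite /F /Ft /Fe -!EFinM sumEFin -!EFinD lee_fin.
  apply: (@le_trans _ _ (expR x)); first by rewrite lerBlDr lerDl expR_ge0.
  have s0' : (0 <= \sum_(i < n) expR (k + i.+1%:R * s) *
     \1_(A (k + i%:R * s)) x)%R.
    by apply: sumr_ge0 => i _; rewrite mulr_ge0 ?expR_ge0 // indicE ler0n.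
  have t0 : (0 <= expR t * \1_(A (k + n%:R * s)) x)%R.
    by rewrite mulr_ge0 ?expR_ge0 // indicE ler0n.
  have e0' : (0 <= expR (- eps * t) * expR ((1 + eps) * x))%R.
    by rewrite mulr_ge0 ?expR_ge0.
  have [hn|hn] := leP x (k + n%:R * s)%R.
    have := grid_bound _ _ _ _ kx hn => h; rewrite -addrA; apply: le_trans h _.
    by rewrite lerDl addr_ge0.
  have hx : x \in A (k + n%:R * s)%R.
    by apply/mem_set; rewrite /A /= in_itv /= andbT.
  have h1 : (\1_(A (k + n%:R * s)%R) x = 1 :> R)%R by rewrite indicE hx.
  rewrite h1 mulr1.
  have [xt|xt] := leP x t.
    apply: (@le_trans _ _ (expR t)); first by rewrite ler_expR.
    by rewrite -addrA addrC -addrA lerDl addr_ge0.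
  apply: (@le_trans _ _ (expR (- eps * t) * expR ((1 + eps) * x))%R); last first.
    by rewrite lerDr addr_ge0 // expR_ge0.
  rewrite -expRD ler_expR.
  have : (eps * t <= eps * x)%R by rewrite ler_pM2l // ltW.
  move=> h; lra.
apply: (@le_trans _ _ (\int[mu]_(x in D) (\sum_(i < n) F i x + Ft x + Fe x))).
  apply: ge0_le_integral => //.
  - by move=> x Dx; rewrite lee_fin subr_ge0 ler_expR; apply: ltW; move: Dx; rewrite /D /= in_itv /= andbT.
  - apply: mEF; apply: measurable_funB; [exact: measurable_expR|exact: measurable_cst].
  - apply: emeasurable_funD; [apply: emeasurable_funD => //|exact: mFe].
    exact: emeasurable_sum.
rewrite ge0_integralD //; last 2 first.
  - by move=> x Dx; rewrite adde_ge0 // ?Fs0 ?Ft0.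
  - by apply: emeasurable_funD => //; exact: emeasurable_sum.
rewrite ge0_integralD //; last exact: emeasurable_sum.
rewrite ge0_integral_sum //.
have hI (v : R) y : (0 <= v)%R ->
    \int[mu]_(x in D) (v%:E * (\1_(A y) x)%:E) <= v%:E * mu (A y).
  move=> v0; rewrite ge0_integralZl_EFin //;
    try (by move=> x _; rewrite lee_fin indicE ler0n); try exact: mI.
  rewrite integral_indic //; apply: lee_wpmul2l; first by rewrite lee_fin.
  apply: le_measure; [rewrite inE; exact: measurableI|rewrite inE; exact: mA|exact: subIsetl].
apply: leeD; first apply: leeD.
- apply: lee_sum => i _; apply: hI; exact: expR_ge0.
- apply: hI; exact: expR_ge0.
- rewrite /Fe ge0_integralZl_EFin //; try (by move=> x _; rewrite lee_fin expR_ge0);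
    try (by apply: expR_ge0); try (exact: mEF).
  apply: lee_wpmul2l; first by rewrite lee_fin expR_ge0.
  apply: ge0_subset_integral => //; first exact: mEF.
Qed.

End Meas.

Theorem lemma2 (R : realType) (mu : probability R R) (alpha : R) :
  (exists2 eps : R, 0 < eps &
     (\int[mu]_x (expR ((1 + eps) * x))%:E < +oo)%E) ->
  1 <= alpha ->
  regularly_varying alpha (fun x => - ln (1 - law_cdf mu x)) ->
  regularly_varying alpha (fun k => - ln (call_price mu k)) /\
  asym_equiv (fun k => - ln (call_price mu k))
             (fun k => - k - ln (1 - law_cdf mu k)).
Proof.
move=> [eps e0 Ifin] a1 rvG.
pose G x := 1 - law_cdf mu x.
pose g x := - ln (G x).
pose I k := (\int[mu]_(x in [set` `]k, +oo[]) (expR x - expR k)%:E)%E.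
pose Ie := (\int[mu]_x (expR ((1 + eps) * x))%:E)%E.
pose M0 := fine Ie.
have mexp : measurable_fun setT (fun x : R => expR ((1 + eps) * x)).
  apply: measurableT_comp; first exact: measurable_expR.
  exact: (measurable_funM (measurable_cst (1 + eps)) (@measurable_id _ _ setT)).
have Ie0 : (0 <= Ie)%E by apply: integral_ge0 => x _; rewrite lee_fin expR_ge0.
have Iefin : Ie \is a fin_num by rewrite ge0_fin_numE.
have IeE : Ie = M0%:E by rewrite /M0 fineK.
have M0ge0 : 0 <= M0 by rewrite /M0 fine_ge0.
have GE x : G x = fine (mu [set` `]x, +oo[]) by rewrite /G cdf_tail.
have muE x : mu [set` `]x, +oo[] = (G x)%:E by rewrite GE fineK // mu_fin.
have Gmono x y : x <= y -> G y <= G x.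
  move=> xy; rewrite !GE; apply: fine_le; rewrite ?mu_fin //.
  apply: le_measure; rewrite ?inE //.
  by move=> z /=; rewrite !in_itv /= !andbT; apply: le_lt_trans.
have Gpos x : 0 < G x.
  case: (rvG) => _ [[K [_ HK]] _].
  pose y := Num.max x (K + 1).
  have Ky : K < y by rewrite lt_max orbC ltrDl ltr01.
  have := HK y Ky; rewrite /= oppr_gt0 => hy.
  have Gy : 0 < G y.
    rewrite ltNge; apply/negP => Gy0.
    by move: hy; rewrite /G ln0 // ltxx.
  apply: lt_le_trans Gy (Gmono _ _ _).
  by rewrite le_max lexx.
have eG x : expR (- g x) = G x by rewrite /g opprK lnK // posrE.
have mI k : (0 <= I k)%E.
  apply: integral_ge0 => x; rewrite /= in_itv /= andbT => kx.
  by rewrite lee_fin subr_ge0 ler_expR ltW.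
have Ifn k : I k \is a fin_num.
  rewrite ge0_fin_numE //.
  have := ub_int R mu k 0 1 eps 0 ltr01 e0.
  rewrite big_ord0 add0r => h; apply: le_lt_trans h _.
  by rewrite muE -/Ie IeE -!EFinM -EFinD ltry.
have cE k : call_price mu k = fine (I k) by [].
have clow k b : k < b -> (expR b - expR k) * expR (- g b) <= call_price mu k.
  move=> kb; rewrite eG cE.
  have := @lb_int R mu [set` `]k, +oo[] [set` `]b, +oo[] (fun x => expR x - expR k)
    (expR b - expR k) (measurable_itv _) (measurable_itv _).
  rewrite muE -EFinM => h.
  rewrite -[X in X <= _]/(fine ((expR b - expR k) * G b)%:E).
  apply: fine_le => //; apply: h.
  - by move=> z /=; rewrite !in_itv /= !andbT; apply: lt_trans.
  - apply: measurable_funB; [exact: measurable_expR|exact: measurable_cst].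
  - by move=> x /=; rewrite in_itv /= andbT => kx; rewrite subr_ge0 ler_expR ltW.
  - by move=> x /=; rewrite in_itv /= andbT => bx; rewrite lerD2r ler_expR ltW.
  - by rewrite subr_ge0 ler_expR ltW.
have tail x : (1 + eps) * x - ln M0 <= g x.
  have := @lb_int R mu setT [set` `]x, +oo[] (fun x => expR ((1 + eps) * x))
    (expR ((1 + eps) * x)) measurableT (measurable_itv _).
  rewrite muE -EFinM -/Ie IeE lee_fin => h.
  have {}h : expR ((1 + eps) * x) * G x <= M0.
    apply: h => //.
    by move=> z /=; rewrite in_itv /= andbT => xz; rewrite ler_expR ler_pM2l ?ltW // addr_gt0.
  have M00 : 0 < M0 by apply: lt_le_trans h; rewrite mulr_gt0 ?expR_gt0.
  have := h; rewrite -ler_ln ?posrE ?mulr_gt0 ?expR_gt0 // lnM ?posrE ?expR_gt0 //.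
  by rewrite expRK /g => h2; lra.
have cup k t s n : 0 < s -> call_price mu k <=
     \sum_(i < n) (expR (k + (i.+1)%:R * s) * expR (- g (k + i%:R * s)))
     + expR t * expR (- g (k + n%:R * s)) + expR (- ((1 + eps) - 1) * t) * M0.
  move=> s0; rewrite cE.
  have := ub_int R mu k t s eps n s0 e0.
  under eq_bigr do rewrite muE -EFinM.
  rewrite sumEFin muE -/Ie IeE -!EFinM -!EFinD => h.
  have -> : (1 + eps) - 1 = eps by ring.
  under eq_bigr do rewrite eG.
  rewrite eG.
  by rewrite -[X in _ <= X]/(fine (_ : R)%:E); apply: fine_le.
have cni x y : x <= y -> call_price mu y <= call_price mu x.
  move=> xy; rewrite !cE; apply: fine_le => //.
  apply: (@le_trans _ _ (\int[mu]_(z in [set` `]y, +oo[]) (expR z - expR x)%:E)%E).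
    apply: ge0_le_integral => //.
    - by move=> z /=; rewrite in_itv /= andbT => yz; rewrite lee_fin subr_ge0 ler_expR ltW.
    - apply: mEF; apply: measurable_funB; [exact: measurable_expR|exact: measurable_cst].
    - apply: mEF; apply: measurable_funB; [exact: measurable_expR|exact: measurable_cst].
    - by move=> z _; rewrite lee_fin lerD2l lerN2 ler_expR.
  apply: ge0_subset_integral => //.
  - apply: mEF; apply: measurable_funB; [exact: measurable_expR|exact: measurable_cst].
  - move=> z /=; rewrite in_itv /= andbT => xz; rewrite lee_fin subr_ge0 ler_expR ltW //.
  - by move=> z /=; rewrite !in_itv /= !andbT; apply: le_lt_trans.
have p1 : 1 < 1 + eps by rewrite ltrDl.
have [H1 H2] := @core_main R g (call_price mu) alpha (1 + eps) (ln M0) M0 p1 a1 tail rvG.2.2 M0ge0 clow cup cni.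
split => //.
have -> : (fun k => - k - ln (1 - law_cdf mu k)) = (fun k => g k - k).
  by apply/funext => k; rewrite /g /G addrC.
exact: H2.
Qed.
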